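(* Let $G_1=(V_1,E_1)$ be a graph of maximum degree $\Delta_1$ and let $G_2=(V_2,E_2)$ be a $\delta_2$-regular graph. Let $S_1\subseteq V_1$. For every integer $k\in\{\delta_2-\Delta_1,\dots,\Delta_1+\delta_2\}$, $S_1\times V_2$ is a $k$-daf set in $G_1\times G_2$ if and only if $S_1$ is a $(k-\delta_2)$-daf set in $G_1$.
   Context: All graphs are finite and simple (with non-empty vertex sets). For a graph $G=(V,E)$, a set $S\subseteq V$ and $v\in V$, let $\delta_S(v)=|\{u\in S: uv\in E\}|$ and $\overline{S}=V\setminus S$. For an integer $k$, a non-empty set $S\subseteq V$ is a defensive $k$-alliance if $\delta_S(v)\ge \delta_{\overline S}(v)+k$ for every $v\in S$. A set $X\subseteq V$ is a defensive $k$-alliance free set ($k$-daf set) if no defensive $k$-alliance $S$ satisfies $S\subseteq X$. The Cartesian product $G_1\times G_2$ of $G_1=(V_1,E_1)$, $G_2=(V_2,E_2)$ has vertex set $V_1\times V_2$, with $(a,b)$ adjacent to $(c,d)$ iff either $a=c$ and $bd\in E_2$, or $b=d$ and $ac\in E_1$. *)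

(* Defs.v *)
From HB Require Import structures.
From mathcomp Require Import all_boot all_order all_algebra.
Set Implicit Arguments. Unset Strict Implicit. Unset Printing Implicit Defensive.
Import Order.TTheory GRing.Theory Num.Theory.

Definition simple_graph (T : finType) (e : rel T) : Prop :=
  symmetric e /\ irreflexive e.

Definition deg_in (T : finType) (e : rel T) (S : {set T}) (v : T) : nat :=
  #|[set u in S | e v u]|.

Definition deg (T : finType) (e : rel T) (v : T) : nat := deg_in e setT v.

Definition max_deg (T : finType) (e : rel T) : nat := \max_(v : T) deg e v.

Definition regular (T : finType) (e : rel T) (d : nat) : Prop :=
  forall v : T, deg e v = d.

Definition def_alliance (T : finType) (e : rel T) (k : int) (S : {set T}) : Prop :=
  S != set0 /\
  forall v, v \in S -> ((deg_in e S v)%:Z >= (deg_in e (~: S) v)%:Z + k)%R.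

Definition kdaf (T : finType) (e : rel T) (k : int) (X : {set T}) : Prop :=
  forall S : {set T}, S \subset X -> ~ def_alliance e k S.

Definition cart_rel (T1 T2 : finType) (e1 : rel T1) (e2 : rel T2) : rel (T1 * T2) :=
  fun x y => ((x.1 == y.1) && e2 x.2 y.2) || ((x.2 == y.2) && e1 x.1 y.1).

(* Main.v *)
Require Import Defs.
From mathcomp Require Import all_boot all_order all_algebra.
From mathcomp Require Import zify.
Import Order.TTheory GRing.Theory Num.Theory.

Lemma deg_split {T : finType} (e : rel T) S v :
  deg_in e S v + deg_in e (~:S) v = deg e v.
Proof.
rewrite /deg /deg_in.
have -> : [set u in [set: T] | e v u] = [set u | e v u].
  by apply/setP => u; rewrite !inE.
rewrite -(cardsID S [set u | e v u]).
by congr (_ + _); apply: eq_card => u; rewrite !inE andbC.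
Qed.

Lemma in_imL (T1 T2 : finType) (a : T1) (X : {set T2}) (u : T1 * T2) :
  (u \in (fun y => (a, y)) @: X) = (u.1 == a) && (u.2 \in X).
Proof.
case: u => x y /=; apply/imsetP/andP => [[z zX [-> ->]] | [/eqP -> yX]].
  by rewrite eqxx.
by exists y.
Qed.

Lemma in_imR (T1 T2 : finType) (b : T2) (X : {set T1}) (u : T1 * T2) :
  (u \in (fun x => (x, b)) @: X) = (u.2 == b) && (u.1 \in X).
Proof.
case: u => x y /=; apply/imsetP/andP => [[z zX [-> ->]] | [/eqP -> yX]].
  by rewrite eqxx.
by exists x.
Qed.

Lemma deg_cart (T1 T2 : finType) (e1 : rel T1) (e2 : rel T2)
  (irr : irreflexive e1) (S : {set T1 * T2}) a b :
  deg_in (cart_rel e1 e2) S (a, b) =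
  #|[set a' | ((a', b) \in S) && e1 a a']| + #|[set b' | ((a, b') \in S) && e2 b b']|.
Proof.
rewrite /deg_in.
have -> : [set u in S | cart_rel e1 e2 (a, b) u] =
  ((fun x => (x, b)) @: [set a' | ((a', b) \in S) && e1 a a'])
  :|: ((fun y => (a, y)) @: [set b' | ((a, b') \in S) && e2 b b']).
  apply/setP => -[x y]; rewrite !inE in_imL in_imR !inE /cart_rel /=.
  case: (eqVneq x a) => [->|xa]; case: (eqVneq y b) => [->|yb];
    rewrite ?irr ?eqxx /= ?andbF ?orbF //.
rewrite cardsU.
have -> : (fun x => (x, b)) @: [set a' | ((a', b) \in S) && e1 a a']
  :&: (fun y => (a, y)) @: [set b' | ((a, b') \in S) && e2 b b'] = set0.
  apply/setP => -[x y]; rewrite !inE in_imL in_imR !inE /=.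
  case: (eqVneq x a) => [->|]; by rewrite ?irr ?andbF.
rewrite cards0 subn0 !card_imset //.
  by move=> y1 y2 [].
by move=> x1 x2 [].
Qed.

Lemma deg_prod (T1 T2 : finType) (e1 : rel T1) (e2 : rel T2)
  (irr : irreflexive e1) d2 (reg2 : regular e2 d2) a b :
  deg (cart_rel e1 e2) (a, b) = deg e1 a + d2.
Proof.
rewrite /deg deg_cart // -(reg2 b) /deg /deg_in.
by congr (_ + _); apply: eq_card => x; rewrite !inE.
Qed.

Theorem proposition2 (T1 T2 : finType) (e1 : rel T1) (e2 : rel T2)
  (x1 : T1) (x2 : T2)
  (G1 : simple_graph e1) (G2 : simple_graph e2)
  (d2 : nat) (reg2 : regular e2 d2) (S1 : {set T1}) (k : int) :
  ((d2%:Z - (max_deg e1)%:Z <= k)%R /\ (k <= (max_deg e1)%:Z + d2%:Z)%R) ->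
  (kdaf (cart_rel e1 e2) k (setX S1 [set: T2]) <-> kdaf e1 (k - d2%:Z)%R S1).
Proof.
move=> _; have irr := G1.2; split.
- move=> H A sub [nz all]; apply: (H (setX A setT)).
    apply/subsetP => -[x y]; rewrite !inE !andbT => xA; exact: (subsetP sub).
  split.
    case/set0Pn: nz => a aA; apply/set0Pn; exists (a, x2); by rewrite !inE aA.
  move=> [a b]; rewrite !inE andbT /= => aA; have h := all a aA.
  have dS : deg_in (cart_rel e1 e2) (setX A setT) (a, b) = deg_in e1 A a + d2.
    rewrite deg_cart // -(reg2 b) /deg /deg_in.
    by congr (_ + _); apply: eq_card => x; rewrite !inE ?andbT ?aA.
  have dC := deg_split (cart_rel e1 e2) (setX A setT) (a, b).
  have dP := @deg_prod _ _ e1 e2 irr d2 reg2 a b.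
  have d1 := deg_split e1 A a.
  lia.
- move=> H S sub [nz all].
  pose A := [set a | [exists b, (a, b) \in S]].
  apply: (H A).
    apply/subsetP => a; rewrite inE => /existsP [b abS].
    by have := subsetP sub _ abS; rewrite inE => /andP[].
  split.
    case/set0Pn: nz => -[a b] abS; apply/set0Pn; exists a; rewrite inE.
    by apply/existsP; exists b.
  move=> a; rewrite inE => /existsP [b abS]; have h := all _ abS.
  have dS : deg_in (cart_rel e1 e2) S (a, b) <= deg_in e1 A a + d2.
    rewrite deg_cart // -(reg2 b) /deg /deg_in; apply: leq_add.
      apply: subset_leq_card; apply/subsetP => x; rewrite !inE => /andP[xS ->].
      by rewrite andbT; apply/existsP; exists b.
    by apply: subset_leq_card; apply/subsetP => x; rewrite !inE => /andP[_ ->].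
  have dC := deg_split (cart_rel e1 e2) S (a, b).
  have dP := @deg_prod _ _ e1 e2 irr d2 reg2 a b.
  have d1 := deg_split e1 A a.
  lia.
Qed.
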